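(* Let $pqr$ be a non-degenerate triangle in $\mathbb{R}^2$ and let $\tau(p),\tau(q),\tau(r)$ be real numbers with $\tau(p)\le\tau(q)\le\tau(r)$. Let $\sigma>0$ and suppose $\|\nabla\tau\|<\sigma$. Let $0<\varepsilon<1$ and $d_p:=\operatorname{dist}(p,\operatorname{aff}(qr))$. For $\delta\ge0$ let $\tau'_\delta$ denote the affine function on $\mathbb{R}^2$ with $\tau'_\delta(p)=\tau(p)+\delta$, $\tau'_\delta(q)=\tau(q)$, $\tau'_\delta(r)=\tau(r)$. (1) If $\angle pqr\le\pi/2$ and $\frac{\tau(r)-\tau(q)}{|qr|}\le(1-\varepsilon)\sigma$, then $\|\nabla\tau'_\delta\|<\sigma$ for every $\delta\in[0,\varepsilon\, d_p\,\sigma]$. (2) If $\pi/2<\angle pqr<\pi$ and $\frac{\tau(r)-\tau(q)}{|qr|}\le(1-\varepsilon)\,\sigma\,\sin\angle pqr$, then $\|\nabla\tau'_\delta\|<\sigma$ for every $\delta\in[0,\varepsilon\, d_p\,\sigma]$.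
   Context: Given real values at the three vertices of a triangle, $\tau$ also denotes the unique affine function $\mathbb{R}^2\to\mathbb{R}$ interpolating them, and $\nabla\tau\in\mathbb{R}^2$ is its (constant) gradient with Euclidean norm $\|\nabla\tau\|$. $\operatorname{aff}(qr)$ is the line through $q$ and $r$, and $|qr|$ the length of segment $qr$. *)

(* Defs.v *)
From Stdlib Require Import Reals Lra.
Open Scope R_scope.

Definition pt := (R * R)%type.

Definition dot (u v : pt) : R := fst u * fst v + snd u * snd v.
Definition vsub (u v : pt) : pt := (fst u - fst v, snd u - snd v).
Definition vnorm (u : pt) : R := sqrt (dot u u).
Definition seglen (u v : pt) : R := vnorm (vsub v u).
Definition cross (u v : pt) : R := fst u * snd v - snd u * fst v.

Definition nondegenerate (p q r : pt) : Prop := cross (vsub q p) (vsub r p) <> 0.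

Definition angle (p q r : pt) : R :=
  acos (dot (vsub p q) (vsub r q) / (seglen q p * seglen q r)).

Definition dist_line (x q r : pt) : R :=
  Rabs (cross (vsub r q) (vsub x q)) / seglen q r.

(* The (constant) gradient of the unique affine function R^2 -> R taking
   values a, b, c at p, q, r (Cramer's rule for g.(q-p) = b-a, g.(r-p) = c-a). *)
Definition grad (p q r : pt) (a b c : R) : pt :=
  let D := cross (vsub q p) (vsub r p) in
  (((b - a) * (snd r - snd p) - (c - a) * (snd q - snd p)) / D,
   ((c - a) * (fst q - fst p) - (b - a) * (fst r - fst p)) / D).

Lemma grad_spec (p q r : pt) (a b c : R) :
  nondegenerate p q r ->
  dot (grad p q r a b c) (vsub q p) = b - a /\
  dot (grad p q r a b c) (vsub r p) = c - a.
Proof.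
  unfold nondegenerate, grad, dot, vsub, cross; destruct p, q, r; simpl; intro H.
  split; field; exact H.
Qed.

(* Main.v *)
Require Import Defs.
From Stdlib Require Import Reals.
From Stdlib Require Import Lra Psatz.
Open Scope R_scope.

Lemma case1 (L d A C X delta sigma eps : R) :
  0 < L -> 0 < d -> 0 <= A -> 0 <= C -> 0 < eps < 1 -> 0 < sigma ->
  A <= (1 - eps) * sigma * L -> X <= - (A * C) ->
  A*A*(d*d) + X*X < sigma*sigma*(L*L)*(d*d) ->
  0 <= delta -> delta * L <= eps * sigma * d ->
  A*A*(d*d) + (X + delta*(L*L))*(X + delta*(L*L)) < sigma*sigma*(L*L)*(d*d).
Proof.
  intros HL Hd HA HC He Hs HA1 HX H0 Hd0 Hd1.
  assert (HX0 : X <= 0) by nra.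
  destruct (Rle_or_lt 0 (X + delta*(L*L))) as [Hp|Hn].
  - assert (E1 : (X + delta*(L*L))*(X + delta*(L*L)) <= (delta*L*L)*(delta*L*L)) by nra.
    assert (E2 : (delta*L*L)*(delta*L*L) <= (eps*sigma*d*L)*(eps*sigma*d*L)).
    { assert (0 <= delta*L*L) by nra. assert (delta*L*L <= eps*sigma*d*L) by nra. nra. }
    assert (E3 : A*A <= ((1-eps)*sigma*L)*((1-eps)*sigma*L)) by nra.
    assert (E4 : A*A*(d*d) <= ((1-eps)*sigma*L)*((1-eps)*sigma*L)*(d*d)) by nra.
    assert (E5 : 0 < sigma*sigma*(L*L)*(d*d)*(eps*(1-eps))).
    { assert (0 < eps*(1-eps)) by (apply Rmult_lt_0_compat; lra).
      assert (0 < sigma*sigma*(L*L)*(d*d)) by (repeat apply Rmult_lt_0_compat; lra).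
      apply Rmult_lt_0_compat; lra. }
    nra.
  - assert (0 <= delta*(L*L)) by (apply Rmult_le_pos; nra).
    assert (0 <= delta*(L*L) * (- (2*X + delta*(L*L)))) by (apply Rmult_le_pos; lra).
    assert ((X + delta*(L*L))*(X + delta*(L*L)) <= X*X) by nra. nra.
Qed.

Lemma case2 (L V d A C X delta sigma eps : R) :
  0 < L -> 0 < V -> 0 < d -> 0 <= A -> C < 0 -> 0 < eps < 1 -> 0 < sigma ->
  C*C + d*d = V*V*(L*L) ->
  A * V <= (1 - eps) * sigma * d -> X <= - (A * C) ->
  A*A*(d*d) + X*X < sigma*sigma*(L*L)*(d*d) ->
  0 <= delta -> delta * L <= eps * sigma * d ->
  A*A*(d*d) + (X + delta*(L*L))*(X + delta*(L*L)) < sigma*sigma*(L*L)*(d*d).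
Proof.
  intros HL HV Hd HA HC He Hs HCD HA1 HX H0 Hd0 Hd1.
  destruct (Rle_or_lt 0 (X + delta*(L*L))) as [Hp|Hn].
  - set (c := - C). set (M := A*V).
    assert (Hc : 0 < c) by (unfold c; lra).
    assert (HcL : c < V*L).
    { assert (0 < d*d) by nra.
      assert (c*c < (V*L)*(V*L)) by (unfold c; lra).
      assert (0 < V*L) by nra.
      destruct (Rlt_or_le c (V*L)) as [h|h]; [exact h|].
      assert ((V*L)*(V*L) <= c*c) by (apply Rmult_le_compat; lra). lra. }
    assert (Hup : X + delta*(L*L) <= A*c + eps*sigma*d*L) by (unfold c; nra).
    assert (E1 : (X + delta*(L*L))*(X + delta*(L*L)) <= (A*c + eps*sigma*d*L)*(A*c + eps*sigma*d*L)) by nra.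
    assert (HM : 0 <= M) by (unfold M; nra).
    assert (HM1 : M <= (1 - eps) * sigma * d) by exact HA1.
    assert (E2 : (M*c + eps*sigma*d*L*V) <= ((1-eps)*sigma*d*c + eps*sigma*d*L*V)).
    { assert (M*c <= (1-eps)*sigma*d*c) by (apply Rmult_le_compat_r; lra). lra. }
    assert (E3 : 0 <= M*c + eps*sigma*d*L*V).
    { assert (0 <= M*c) by (apply Rmult_le_pos; lra).
      assert (0 <= eps*sigma*d*L*V) by (repeat apply Rmult_le_pos; lra). lra. }
    assert (E4 : (M*c + eps*sigma*d*L*V)*(M*c + eps*sigma*d*L*V) <= ((1-eps)*sigma*d*c + eps*sigma*d*L*V)*((1-eps)*sigma*d*c + eps*sigma*d*L*V)) by (apply Rmult_le_compat; lra).
    assert (E5 : M*M <= ((1-eps)*sigma*d)*((1-eps)*sigma*d)) by (apply Rmult_le_compat; lra).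
    assert (E6 : 0 < eps*(1-eps)*(V*L - c)) by (repeat apply Rmult_lt_0_compat; lra).
    assert (E7 : 0 < sigma*sigma*d*d*c*2*(V*L)) by (repeat apply Rmult_lt_0_compat; lra).
    assert (K : (A*A*(d*d) + (A*c + eps*sigma*d*L)*(A*c + eps*sigma*d*L))*(V*V) < sigma*sigma*(L*L)*(d*d)*(V*V)).
    { replace ((A*A*(d*d) + (A*c + eps*sigma*d*L)*(A*c + eps*sigma*d*L))*(V*V)) with
        (M*M*(d*d) + (M*c + eps*sigma*d*L*V)*(M*c + eps*sigma*d*L*V)) by (unfold M; ring).
      assert (M*M*(d*d) <= ((1-eps)*sigma*d)*((1-eps)*sigma*d)*(d*d)) by nra.
      assert (HCD' : c*c + d*d = V*V*(L*L)) by (unfold c; nra).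
      assert (E8 : 0 < sigma*sigma*d*d*(eps*(1-eps)*(V*L - c))*(2*(V*L))).
      { assert (0 < sigma*sigma*d*d) by (repeat apply Rmult_lt_0_compat; lra).
        apply Rmult_lt_0_compat; [apply Rmult_lt_0_compat|]; lra. }
      nra. }
    assert (0 < V*V) by nra.
    assert (A*A*(d*d) + (A*c + eps*sigma*d*L)*(A*c + eps*sigma*d*L) < sigma*sigma*(L*L)*(d*d)).
    { apply (Rmult_lt_reg_r (V*V)); lra. }
    nra.
  - assert (0 <= delta*(L*L)) by (apply Rmult_le_pos; nra).
    assert (0 <= delta*(L*L) * (- (2*X + delta*(L*L)))) by (apply Rmult_le_pos; lra).
    assert ((X + delta*(L*L))*(X + delta*(L*L)) <= X*X) by nra. nra.
Qed.

Lemma key_id (w v X : pt) :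
  dot w w * (cross w v * cross w v) * dot X X =
  dot X w * dot X w * (cross w v * cross w v) +
  (dot w w * dot X v - dot X w * dot v w) * (dot w w * dot X v - dot X w * dot v w).
Proof. destruct w, v, X; unfold dot, cross; simpl; ring. Qed.

Lemma lag_id (w v : pt) :
  dot v w * dot v w + cross w v * cross w v = dot v v * dot w w.
Proof. destruct w, v; unfold dot, cross; simpl; ring. Qed.

Lemma grad_w (p q r : pt) a b c : nondegenerate p q r ->
  dot (grad p q r a b c) (vsub r q) = c - b.
Proof.
  unfold nondegenerate, grad, dot, vsub, cross; destruct p, q, r; simpl; intro H.
  field; exact H.
Qed.

Lemma grad_v (p q r : pt) a b c : nondegenerate p q r ->
  dot (grad p q r a b c) (vsub p q) = a - b.
Proof.
  unfold nondegenerate, grad, dot, vsub, cross; destruct p, q, r; simpl; intro H.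
  field; exact H.
Qed.

Lemma cross_eq (p q r : pt) :
  cross (vsub q p) (vsub r p) = cross (vsub r q) (vsub p q).
Proof. destruct p, q, r; unfold vsub, cross; simpl; ring. Qed.

Lemma dot_nonneg (u : pt) : 0 <= dot u u.
Proof. destruct u; unfold dot; simpl; nra. Qed.

Theorem mainTheorem3 (p q r : pt) (tp tq tr sigma eps : R) :
  nondegenerate p q r ->
  tp <= tq -> tq <= tr ->
  0 < sigma ->
  vnorm (grad p q r tp tq tr) < sigma ->
  0 < eps < 1 ->
  (angle p q r <= PI / 2 ->
   (tr - tq) / seglen q r <= (1 - eps) * sigma ->
   forall delta, 0 <= delta <= eps * dist_line p q r * sigma ->
     vnorm (grad p q r (tp + delta) tq tr) < sigma)
  /\
  (PI / 2 < angle p q r < PI ->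
   (tr - tq) / seglen q r <= (1 - eps) * sigma * sin (angle p q r) ->
   forall delta, 0 <= delta <= eps * dist_line p q r * sigma ->
     vnorm (grad p q r (tp + delta) tq tr) < sigma).
Proof.
  intros Hnd Hpq Hqr Hs HG He.
  set (w := vsub r q). set (v := vsub p q).
  set (L2 := dot w w). set (V2 := dot v v).
  set (D := cross w v). set (C := dot v w).
  set (A := tr - tq).
  assert (HD : D <> 0) by (unfold D, w, v; rewrite <- cross_eq; exact Hnd).
  assert (HDD : 0 < D * D) by (destruct (Rlt_or_le 0 D); nra).
  assert (HL2p : 0 <= L2) by apply dot_nonneg.
  assert (HV2p : 0 <= V2) by apply dot_nonneg.
  assert (Hlag : C * C + D * D = V2 * L2) by (unfold C, D, V2, L2; apply lag_id).
  assert (HL2 : 0 < L2) by (destruct HL2p as [h|h]; [exact h| rewrite <- h in Hlag; nra]).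
  assert (HV2 : 0 < V2) by (destruct HV2p as [h|h]; [exact h| rewrite <- h in Hlag; nra]).
  set (L := seglen q r). set (V := seglen q p).
  assert (HLL : L * L = L2) by (unfold L, seglen, vnorm; apply sqrt_sqrt; lra).
  assert (HVV : V * V = V2) by (unfold V, seglen, vnorm; apply sqrt_sqrt; lra).
  assert (HL : 0 < L) by (unfold L, seglen, vnorm; apply sqrt_lt_R0; exact HL2).
  assert (HV : 0 < V) by (unfold V, seglen, vnorm; apply sqrt_lt_R0; exact HV2).
  set (d := Rabs D).
  assert (Hd : 0 < d) by (unfold d; apply Rabs_pos_lt; exact HD).
  assert (Hdd : d * d = D * D) by (unfold d; rewrite <- Rabs_mult; apply Rabs_pos_eq; lra).
  set (G := grad p q r tp tq tr).
  assert (HGw : dot G w = A) by (apply grad_w; exact Hnd).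
  assert (HGv : dot G v = tp - tq) by (apply grad_v; exact Hnd).
  set (X := L2 * (tp - tq) - A * C).
  assert (HA : 0 <= A) by (unfold A; lra).
  assert (HX : X <= - (A * C)) by (unfold X; nra).
  assert (HGG : dot G G < sigma * sigma).
  { assert (h1 := dot_nonneg G).
    assert (h2 : sqrt (dot G G) * sqrt (dot G G) = dot G G) by (apply sqrt_sqrt; exact h1).
    assert (h3 : 0 <= sqrt (dot G G)) by apply sqrt_pos.
    unfold vnorm in HG. fold G in HG. nra. }
  assert (H0 : A*A*(d*d) + X*X < sigma*sigma*(L*L)*(d*d)).
  { assert (K := key_id w v G). fold L2 D C in K. rewrite HGw, HGv in K. fold X in K.
    rewrite Hdd, HLL. rewrite <- K.
    assert (0 < L2 * (D*D)) by (apply Rmult_lt_0_compat; lra).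
    nra. }
  assert (Hgoal : forall delta, 0 <= delta ->
     A*A*(d*d) + (X + delta*(L*L))*(X + delta*(L*L)) < sigma*sigma*(L*L)*(d*d) ->
     vnorm (grad p q r (tp + delta) tq tr) < sigma).
  { intros delta Hdl H.
    set (G' := grad p q r (tp + delta) tq tr).
    assert (HGw' : dot G' w = A) by (apply grad_w; exact Hnd).
    assert (HGv' : dot G' v = tp + delta - tq) by (apply grad_v; exact Hnd).
    assert (K := key_id w v G'). fold L2 D C in K. rewrite HGw', HGv' in K.
    replace (L2 * (tp + delta - tq) - A * C) with (X + delta * L2) in K
      by (unfold X; ring).
    rewrite Hdd, HLL in H. rewrite <- K in H.
    assert (HGG' : dot G' G' < sigma * sigma).
    { assert (0 < L2 * (D*D)) by (apply Rmult_lt_0_compat; lra). nra. }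
    unfold vnorm. rewrite <- (sqrt_square sigma) by lra.
    apply sqrt_lt_1_alt. split; [apply dot_nonneg | exact HGG']. }
  assert (Hdist : dist_line p q r = d / L) by reflexivity.
  assert (Hdel : forall delta, delta <= eps * dist_line p q r * sigma -> delta * L <= eps * sigma * d).
  { intros delta h. rewrite Hdist in h.
    replace (eps * sigma * d) with (eps * (d / L) * sigma * L) by (field; lra).
    apply Rmult_le_compat_r; lra. }
  set (x := C / (V * L)).
  assert (Hang : angle p q r = acos x) by reflexivity.
  assert (HCb : -(V*L) <= C <= V*L).
  { assert (C*C <= (V*L)*(V*L)) by (rewrite Rmult_assoc; rewrite (Rmult_comm L (V*L)); nra).
    assert (0 < V*L) by nra. split; nra. }
  assert (Hx : -1 <= x <= 1).
  { assert (0 < V*L) by nra. unfold x. split.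
    - apply (Rmult_le_reg_r (V*L)); [lra|]. field_simplify; lra.
    - apply (Rmult_le_reg_r (V*L)); [lra|]. field_simplify; lra. }
  assert (HC : C = x * (V * L)) by (unfold x; field; lra).
  split.
  - intros Ha Hq delta [Hd0 Hd1].
    apply Hgoal; [exact Hd0|].
    assert (Hcos : 0 <= cos (acos x)).
    { apply cos_ge_0; [|rewrite <- Hang; exact Ha].
      assert (h := acos_bound x). assert (0 < PI) by apply PI_RGT_0. lra. }
    rewrite cos_acos in Hcos by exact Hx.
    assert (HC0 : 0 <= C) by (rewrite HC; apply Rmult_le_pos; nra).
    apply (case1 L d A C X delta sigma eps); try assumption.
    + fold A L in Hq. apply (Rmult_le_reg_r (/ L)); [apply Rinv_0_lt_compat; lra|].
      replace ((1 - eps) * sigma * L * / L) with ((1-eps)*sigma) by (field; lra). exact Hq.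
    + apply Hdel; exact Hd1.
  - intros [Ha1 Ha2] Hq delta [Hd0 Hd1].
    apply Hgoal; [exact Hd0|].
    assert (Hcos : cos (acos x) < 0).
    { apply cos_lt_0; rewrite <- Hang; [exact Ha1|].
      assert (0 < PI) by apply PI_RGT_0. lra. }
    rewrite cos_acos in Hcos by exact Hx.
    assert (HC0 : C < 0).
    { rewrite HC. assert (0 < V*L) by nra. nra. }
    assert (Hsin : sin (angle p q r) = d / (V * L)).
    { rewrite Hang, sin_acos by exact Hx.
      replace (1 - x²) with ((d / (V*L)) * (d / (V*L))).
      - apply sqrt_square. apply Rlt_le, Rdiv_lt_0_compat; nra.
      - unfold Rsqr, x. field_simplify; [|nra|nra].
        assert (E : d^2 = V^2*L^2 - C^2).
        { replace (V^2*L^2) with (V2*L2) by (rewrite <- HVV, <- HLL; ring).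
          rewrite <- Hlag. simpl. rewrite !Rmult_1_r. rewrite Hdd. ring. }
        rewrite E. reflexivity. }
    apply (case2 L V d A C X delta sigma eps); try assumption.
    + rewrite Hdd, HVV, HLL. exact Hlag.
    + fold A L in Hq. rewrite Hsin in Hq.
      apply (Rmult_le_reg_r (/ L)); [apply Rinv_0_lt_compat; lra|].
      replace ((1 - eps) * sigma * d * / L) with ((1 - eps) * sigma * (d / (V * L)) * V) by (field; lra).
      replace (A * V * / L) with ((A / L) * V) by (field; lra).
      apply Rmult_le_compat_r; lra.
    + apply Hdel; exact Hd1.
Qed.
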